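(* Let $q'>0$, $e'\in(0,1)$, $q_{\max}>0$, $\mathcal D_3=\{(\omega,\omega'):0\le\omega\le\pi/2,\ 0\le\omega'\le\pi\}$, $\mathcal D_4=\{(q,e):0<q\le q_{\max},\ 0\le e\le1\}$. Then: (i) for each $(q,e)\in\mathcal D_4$ and $(\omega,\omega')\in\mathcal D_3$, $$\delta_{\rm int}(q,e,\omega,\omega')\ge\delta_{\rm int}(q,e,0,\pi)=q'-\frac{q(1+e)}{1-e},\qquad \delta_{\rm ext}(q,e,\omega,\omega')\ge\delta_{\rm ext}(q,e,0,\pi)=q-Q';$$ hence for given $(q,e)$ there are internal nodes for all $(\omega,\omega')\in\mathcal D_3$ iff $q'-\frac{q(1+e)}{1-e}>0$, and external nodes for all $(\omega,\omega')\in\mathcal D_3$ iff $q-Q'>0$; (ii) if $q'-\frac{q(1+e)}{1-e}\le0$ and $q-Q'\le0$, then there exists $(\omega,\omega')\in\mathcal D_3$ with $d^+d^-=0$.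
   Context: For $q>0$, $e\in[0,1]$ and angles $\omega,\omega'$, define $r_{\pm}=\frac{q(1+e)}{1\pm e\cos\omega}$, $r'_{\pm}=\frac{q'(1+e')}{1\pm e'\cos\omega'}$ (extended-real values allowed; $\frac{q(1+e)}{1-e}=+\infty$ for $e=1$), $d^+=r'_+-r_+$, $d^-=r'_--r_-$, $\delta_{\rm int}=\min\{d^+,d^-\}$, $\delta_{\rm ext}=\min\{-d^+,-d^-\}$, $Q'=\frac{q'(1+e')}{1-e'}$. Internal nodes: $d^\pm>0$; external nodes: $d^\pm<0$. *)

(* Defs.v *)
From Stdlib Require Import Reals Lra.
Open Scope R_scope.

Inductive ER : Type := Fin (x : R) | PInf | NInf.

(* a / b for a > 0 and b >= 0, with a / 0 = +oo (the paper's convention). *)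
Definition epos_div (a b : R) : ER :=
  if Req_EM_T b 0 then PInf else Fin (a / b).

Definition eopp (x : ER) : ER :=
  match x with Fin a => Fin (- a) | PInf => NInf | NInf => PInf end.

(* extended addition; the (never used here) case +oo + -oo is set to -oo *)
Definition eadd (x y : ER) : ER :=
  match x, y with
  | Fin a, Fin b => Fin (a + b)
  | NInf, _ | _, NInf => NInf
  | PInf, _ | _, PInf => PInf
  end.

Definition esub (x y : ER) : ER := eadd x (eopp y).

Definition ele (x y : ER) : Prop :=
  match x, y with
  | NInf, _ => True
  | _, PInf => True
  | Fin a, Fin b => a <= b
  | _, _ => False
  end.

Definition elt (x y : ER) : Prop := ele x y /\ x <> y.

Definition emin (x y : ER) : ER :=
  match x, y with
  | NInf, _ | _, NInf => NInf
  | PInf, _ => y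
  | _, PInf => x
  | Fin a, Fin b => Fin (Rmin a b)
  end.

Definition r_plus (q e w : R) : ER := epos_div (q * (1 + e)) (1 + e * cos w).
Definition r_minus (q e w : R) : ER := epos_div (q * (1 + e)) (1 - e * cos w).

Definition d_plus (q' e' q e w w' : R) : ER := esub (r_plus q' e' w') (r_plus q e w).
Definition d_minus (q' e' q e w w' : R) : ER := esub (r_minus q' e' w') (r_minus q e w).

Definition delta_int (q' e' q e w w' : R) : ER :=
  emin (d_plus q' e' q e w w') (d_minus q' e' q e w w').
Definition delta_ext (q' e' q e w w' : R) : ER :=
  emin (eopp (d_plus q' e' q e w w')) (eopp (d_minus q' e' q e w w')).

(* Q' = q'(1+e')/(1-e') ; finite since e' < 1 in the theorem *)
Definition Qp (q' e' : R) : R := q' * (1 + e') / (1 - e').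

Definition internal_nodes (q' e' q e w w' : R) : Prop :=
  elt (Fin 0) (d_plus q' e' q e w w') /\ elt (Fin 0) (d_minus q' e' q e w w').
Definition external_nodes (q' e' q e w w' : R) : Prop :=
  elt (d_plus q' e' q e w w') (Fin 0) /\ elt (d_minus q' e' q e w w') (Fin 0).

Definition D3 (w w' : R) : Prop := 0 <= w <= PI / 2 /\ 0 <= w' <= PI.
Definition D4 (qmax q e : R) : Prop := 0 < q <= qmax /\ 0 <= e <= 1.

(* Main.v *)
Require Import Defs.
From Stdlib Require Import Reals Lra.
Open Scope R_scope.

Lemma ldiv a b c: 0<b -> a <= c*b -> a/b <= c.
Proof. intros Hb H. assert (Hi: 0 < /b) by (apply Rinv_0_lt_compat; lra).
assert (E: (c*b - a) * /b = c - a/b) by (field; lra).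
assert (0 <= (c*b - a) * /b) by (apply Rmult_le_pos; lra). lra. Qed.
Lemma rdiv a b c: 0<b -> c*b <= a -> c <= a/b.
Proof. intros Hb H. assert (Hi: 0 < /b) by (apply Rinv_0_lt_compat; lra).
assert (E: (a - c*b) * /b = a/b - c) by (field; lra).
assert (0 <= (a-c*b) * /b) by (apply Rmult_le_pos; lra). lra. Qed.
Lemma div_anti a b b': 0 <= a -> 0 < b' -> b' <= b -> a/b <= a/b'.
Proof. intros Ha Hb' Hbb. apply ldiv; [lra|].
assert (0 <= a/b') by (unfold Rdiv; apply Rmult_le_pos; [lra| left; apply Rinv_0_lt_compat; lra]).
assert (E: a/b' * b' = a) by (field; lra). nra. Qed.

Lemma epos_div_fin a b : b <> 0 -> epos_div a b = Fin (a/b).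
Proof. intros H. unfold epos_div. destruct (Req_EM_T b 0); [contradiction|reflexivity]. Qed.

Lemma cos_w w : 0 <= w <= PI/2 -> 0 <= cos w <= 1.
Proof. intros H. pose proof PI_RGT_0. split; [apply cos_ge_0; lra| apply COS_bound]. Qed.

Lemma L_rp q e w : 0 < q -> 0 <= e <= 1 -> 0 <= cos w <= 1 ->
  exists R, r_plus q e w = Fin R /\ q <= R <= q*(1+e).
Proof. intros Hq He Hc. assert (H1: 0 <= e * cos w <= e) by (split; nra).
unfold r_plus. rewrite epos_div_fin by (intro; nra).
eexists; split; [reflexivity|]. split.
- apply rdiv; nra.
- apply ldiv; [nra|]. assert (0 <= q*(1+e) * (e*cos w)) by (apply Rmult_le_pos; nra). nra. Qed.

Lemma L_pp q' e' w' : 0 < q' -> 0 < e' < 1 ->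
  exists R, r_plus q' e' w' = Fin R /\ q' <= R <= Qp q' e'.
Proof. intros Hq He. pose proof (COS_bound w'). assert (H1: -e' <= e'*cos w' <= e') by (split; nra). unfold r_plus. rewrite epos_div_fin by (intro; nra).
eexists; split; [reflexivity|]. split.
- apply rdiv; nra.
- unfold Qp. apply div_anti; nra. Qed.

Lemma L_mp q' e' w' : 0 < q' -> 0 < e' < 1 ->
  exists R, r_minus q' e' w' = Fin R /\ q' <= R <= Qp q' e'.
Proof. intros Hq He. pose proof (COS_bound w'). assert (H1: -e' <= e'*cos w' <= e') by (split; nra). unfold r_minus. rewrite epos_div_fin by (intro; nra).
eexists; split; [reflexivity|]. split.
- apply rdiv; nra.
- unfold Qp. apply div_anti; nra. Qed.

Lemma L_rm q e w : 0 < q -> 0 <= e <= 1 -> 0 <= cos w <= 1 ->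
  (r_minus q e w = PInf /\ e = 1) \/
  exists R, r_minus q e w = Fin R /\ q <= R /\ (e < 1 -> R <= q*(1+e)/(1-e)).
Proof. intros Hq He Hc. assert (H1: 0 <= e * cos w <= e) by (split; nra). unfold r_minus, epos_div.
destruct (Req_EM_T (1 - e * cos w) 0) as [E|E].
- left. split; [reflexivity| nra].
- right. eexists; split; [reflexivity|]. split.
  + apply rdiv; [nra|]. nra.
  + intros. apply div_anti; nra. Qed.

Lemma emin_ge x a b: ele x a -> ele x b -> ele x (emin a b).
Proof. destruct x, a, b; simpl; auto; intros; try contradiction.
apply Rmin_glb; auto. Qed.

Lemma elt_trans0 B x : elt (Fin 0) B -> ele B x -> elt (Fin 0) x.
Proof. unfold elt. intros [H1 H2] H3; destruct B, x; simpl in *; try contradiction.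
all: split; [simpl; auto; try lra | try discriminate].
all: try (intro E; inversion E; subst; apply H2; f_equal; lra).
Qed.
Lemma elt_opp0 a x : 0 < a -> ele (Fin a) (eopp x) -> elt x (Fin 0).
Proof. unfold elt. intros Ha H. destruct x; simpl in *; try contradiction.
all: split; [simpl; auto; try lra | try discriminate].
intro E; inversion E; lra. Qed.

Lemma acos_ex c : -1 <= c <= 1 -> exists w, 0 <= w <= PI /\ cos w = c.
Proof. intros. exists (acos c). split; [apply acos_bound| apply cos_acos; auto]. Qed.

Lemma acos_ex2 c : 0 <= c <= 1 -> exists w, 0 <= w <= PI/2 /\ cos w = c.
Proof. intros H. destruct (acos_ex c) as [w [Hw Hc]]; [lra|]. exists w. split; auto.
pose proof PI_RGT_0.
split; [lra|]. destruct (Rle_dec w (PI/2)); auto.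
assert (cos w < 0) by (apply cos_lt_0; lra); lra. Qed.

Lemma vals0 q' e' : 0 < q' -> 0 < e' < 1 ->
  r_plus q' e' PI = Fin (Qp q' e') /\ r_minus q' e' PI = Fin q'.
Proof. intros. unfold r_plus, r_minus. rewrite cos_PI.
rewrite !epos_div_fin by (intro; lra). split; f_equal; unfold Qp; field; lra. Qed.

Lemma vals1 q e : 0 < q -> 0 <= e <= 1 ->
  r_plus q e 0 = Fin q /\ r_minus q e 0 = epos_div (q*(1+e)) (1-e).
Proof. intros. unfold r_plus, r_minus. rewrite cos_0, Rmult_1_r.
rewrite (epos_div_fin (q*(1+e)) (1+e)) by (intro; lra). split; [f_equal; field; lra| reflexivity]. Qed.

Lemma B_cases q' q e : 0 < q -> 0 <= e <= 1 ->
  (e = 1 /\ esub (Fin q') (epos_div (q*(1+e)) (1-e)) = NInf) \/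
  (e < 1 /\ esub (Fin q') (epos_div (q*(1+e)) (1-e)) = Fin (q' + - (q*(1+e)/(1-e)))
   /\ q*(1+e) <= q*(1+e)/(1-e)).
Proof. intros Hq He. unfold epos_div. destruct (Req_EM_T (1-e) 0).
- left. split; [lra| reflexivity].
- right. split; [lra|]. split; [reflexivity|].
  assert (E: q*(1+e) = q*(1+e)/1) by field. rewrite E at 1. apply div_anti; nra. Qed.

Lemma gen_bounds q' e' q e w w' : 0 < q' -> 0 < e' < 1 -> 0 < q -> 0 <= e <= 1 ->
  D3 w w' ->
  ele (esub (Fin q') (epos_div (q*(1+e)) (1-e))) (d_plus q' e' q e w w') /\
  ele (esub (Fin q') (epos_div (q*(1+e)) (1-e))) (d_minus q' e' q e w w') /\
  ele (Fin (q - Qp q' e')) (eopp (d_plus q' e' q e w w')) /\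
  ele (Fin (q - Qp q' e')) (eopp (d_minus q' e' q e w w')).
Proof. intros Hq' He' Hq He [Hw Hw'].
pose proof (cos_w w Hw) as Hc.
destruct (L_pp q' e' w' Hq' He') as [Rp' [E1 B1]].
destruct (L_mp q' e' w' Hq' He') as [Rm' [E2 B2]].
destruct (L_rp q e w Hq He Hc) as [Rp [E3 B3]].
unfold d_plus, d_minus. rewrite E1, E2, E3.
destruct (B_cases q' q e Hq He) as [[He1 EB] | [He1 [EB HX]]]; rewrite EB;
destruct (L_rm q e w Hq He Hc) as [[E4 He4] | [Rm [E4 [B4 B5]]]]; rewrite E4; simpl;
repeat split; try lra.
all: try (specialize (B5 He1); lra). all: lra. Qed.

Lemma find_wp q' e' T : 0 < q' -> 0 < e' < 1 -> q' <= T <= Qp q' e' ->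
  exists w', 0 <= w' <= PI /\ r_plus q' e' w' = Fin T.
Proof. intros Hq He HT.
assert (HQ: Qp q' e' * (1 - e') = q' * (1+e')) by (unfold Qp; field; lra).
set (u := q' * (1+e') / T).
assert (Hu1: u <= 1 + e') by (apply ldiv; nra).
assert (Hu2: 1 - e' <= u) by (apply rdiv; nra).
destruct (acos_ex ((u-1)/e')) as [w [Hw Hc]].
{ split; [apply rdiv| apply ldiv]; lra. }
exists w. split; auto. unfold r_plus. rewrite Hc.
replace (1 + e' * ((u-1)/e')) with u by (field; lra).
rewrite epos_div_fin by lra. f_equal. unfold u. field. split; nra. Qed.

Lemma find_w q e T : 0 < q -> 0 < e <= 1 -> q <= T <= q*(1+e) ->
  exists w, 0 <= w <= PI/2 /\ r_plus q e w = Fin T.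
Proof. intros Hq He HT.
set (u := q * (1+e) / T).
assert (Hu1: u <= 1 + e) by (apply ldiv; nra).
assert (Hu2: 1 <= u) by (apply rdiv; nra).
destruct (acos_ex2 ((u-1)/e)) as [w [Hw Hc]].
{ split; [apply rdiv| apply ldiv]; lra. }
exists w. split; auto. unfold r_plus. rewrite Hc.
replace (1 + e * ((u-1)/e)) with u by (field; lra).
rewrite epos_div_fin by lra. f_equal. unfold u. field. split; nra. Qed.

Lemma find_wm q e T : 0 < q -> 0 < e <= 1 -> q*(1+e) <= T -> T*(1-e) <= q*(1+e) ->
  exists w, 0 <= w <= PI/2 /\ r_minus q e w = Fin T.
Proof. intros Hq He HT1 HT2.
assert (HT: 0 < T) by nra.
set (u := q * (1+e) / T).
assert (Hu1: u <= 1) by (apply ldiv; nra).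
assert (Hu2: 1 - e <= u) by (apply rdiv; nra).
assert (Hu3: 0 < u) by (unfold u; apply Rdiv_lt_0_compat; nra).
destruct (acos_ex2 ((1-u)/e)) as [w [Hw Hc]].
{ split; [apply rdiv| apply ldiv]; lra. }
exists w. split; auto. unfold r_minus. rewrite Hc.
replace (1 - e * ((1-u)/e)) with u by (field; lra).
rewrite epos_div_fin by lra. f_equal. unfold u. field. split; nra. Qed.

Lemma part2 q' e' q e : 0 < q' -> 0 < e' < 1 -> 0 < q -> 0 <= e <= 1 ->
  ele (esub (Fin q') (epos_div (q * (1 + e)) (1 - e))) (Fin 0) ->
  q - Qp q' e' <= 0 ->
  exists w w', D3 w w' /\
    (d_plus q' e' q e w w' = Fin 0 \/ d_minus q' e' q e w w' = Fin 0).
Proof. intros Hq' He' Hq He HB HQ. pose proof PI_RGT_0.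
destruct (Rle_dec q' q).
- destruct (find_wp q' e' q Hq' He') as [w' [Hw' E]]; [lra|].
  exists 0, w'. split; [split; lra|]. left. unfold d_plus. rewrite E.
  destruct (vals1 q e Hq He) as [E1 _]. rewrite E1. simpl. f_equal; ring.
- assert (He0: 0 < e).
  { destruct (B_cases q' q e Hq He) as [[He1 _] | [He1 [EB HX]]]; [lra|].
    rewrite EB in HB. simpl in HB. destruct (Req_dec e 0) as [Z|Z]; [|lra].
    assert (q*(1+e)/(1-e) = q) by (rewrite Z; field). lra. }
  destruct (Rle_dec q' (q*(1+e))).
  + destruct (find_w q e q' Hq (conj He0 (proj2 He))) as [w [Hw E]]; [lra|].
    exists w, 0. split; [split; lra|]. left. unfold d_plus. rewrite E.
    destruct (vals1 q' e' Hq' (conj (Rlt_le _ _ (proj1 He')) (Rlt_le _ _ (proj2 He')))) as [E1 _].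
    rewrite E1. simpl. f_equal; ring.
  + assert (Hc: q' * (1-e) <= q*(1+e)).
    { destruct (B_cases q' q e Hq He) as [[He1 _] | [He1 [EB HX]]]; [nra|].
      rewrite EB in HB. simpl in HB.
      assert (E: q*(1+e)/(1-e) * (1-e) = q*(1+e)) by (field; lra). nra. }
    destruct (find_wm q e q' Hq (conj He0 (proj2 He))) as [w [Hw E]]; [lra|lra|].
    exists w, PI. split; [split; lra|]. right. unfold d_minus. rewrite E.
    destruct (vals0 q' e' Hq' He') as [_ E1]. rewrite E1. simpl. f_equal; ring.
Qed.

Lemma dp0 q' e' q e : 0 < q' -> 0 < e' < 1 -> 0 < q -> 0 <= e <= 1 ->
  d_plus q' e' q e 0 PI = Fin (Qp q' e' + - q).
Proof. intros. unfold d_plus. destruct (vals0 q' e') as [E1 _]; auto.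
destruct (vals1 q e) as [E2 _]; auto. rewrite E1, E2. reflexivity. Qed.

Lemma dm0 q' e' q e : 0 < q' -> 0 < e' < 1 -> 0 < q -> 0 <= e <= 1 ->
  d_minus q' e' q e 0 PI = esub (Fin q') (epos_div (q * (1 + e)) (1 - e)).
Proof. intros. unfold d_minus. destruct (vals0 q' e') as [_ E1]; auto.
destruct (vals1 q e) as [_ E2]; auto. rewrite E1, E2. reflexivity. Qed.

Lemma D3_0 : D3 0 PI.
Proof. pose proof PI_RGT_0. split; lra. Qed.

Lemma Qp_ge q' e' : 0 < q' -> 0 < e' < 1 -> q' <= Qp q' e'.
Proof. intros. unfold Qp. apply rdiv; nra. Qed.

Theorem lemma5 (q' e' qmax : R) (hq' : 0 < q') (he' : 0 < e' < 1) (hqmax : 0 < qmax) :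
  (* (i) *)
  (forall q e, D4 qmax q e ->
     delta_int q' e' q e 0 PI = esub (Fin q') (epos_div (q * (1 + e)) (1 - e)) /\
     delta_ext q' e' q e 0 PI = Fin (q - Qp q' e') /\
     (forall w w', D3 w w' ->
        ele (delta_int q' e' q e 0 PI) (delta_int q' e' q e w w') /\
        ele (delta_ext q' e' q e 0 PI) (delta_ext q' e' q e w w'))) /\
  (forall q e, D4 qmax q e ->
     ((forall w w', D3 w w' -> internal_nodes q' e' q e w w') <->
        elt (Fin 0) (esub (Fin q') (epos_div (q * (1 + e)) (1 - e)))) /\
     ((forall w w', D3 w w' -> external_nodes q' e' q e w w') <->
        0 < q - Qp q' e')) /\
  (* (ii) *)
  (forall q e, D4 qmax q e ->
     ele (esub (Fin q') (epos_div (q * (1 + e)) (1 - e))) (Fin 0) ->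
     q - Qp q' e' <= 0 ->
     exists w w', D3 w w' /\
       (d_plus q' e' q e w w' = Fin 0 \/ d_minus q' e' q e w w' = Fin 0)).
Proof.
assert (Hint: forall q e, D4 qmax q e ->
  delta_int q' e' q e 0 PI = esub (Fin q') (epos_div (q * (1 + e)) (1 - e))).
{ intros q e [Hq He]. unfold delta_int. rewrite dp0, dm0 by (auto; lra).
  pose proof (Qp_ge q' e' hq' he').
  destruct (B_cases q' q e) as [[He1 EB] | [He1 [EB HX]]]; try lra; rewrite EB; simpl; auto.
  f_equal. apply Rmin_right. nra. }
assert (Hext: forall q e, D4 qmax q e ->
  delta_ext q' e' q e 0 PI = Fin (q - Qp q' e')).
{ intros q e [Hq He]. unfold delta_ext. rewrite dp0, dm0 by (auto; lra).
  pose proof (Qp_ge q' e' hq' he').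
  destruct (B_cases q' q e) as [[He1 EB] | [He1 [EB HX]]]; try lra; rewrite EB; simpl.
  - f_equal; ring.
  - f_equal. rewrite Rmin_left by nra. ring. }
split; [|split].
- intros q e HD. split; [auto|]. split; [auto|].
  intros w w' H3. rewrite Hint, Hext by auto. destruct HD as [Hq He].
  destruct (gen_bounds q' e' q e w w') as [G1 [G2 [G3 G4]]]; auto; try lra.
  split; apply emin_ge; auto.
- intros q e HD. destruct HD as [Hq He]. split; split.
  + intros H. destruct (H 0 PI D3_0) as [_ H2]. rewrite dm0 in H2 by (auto; lra). exact H2.
  + intros H w w' H3.
    destruct (gen_bounds q' e' q e w w') as [G1 [G2 [G3 G4]]]; auto; try lra.
    split; eapply elt_trans0; eauto.
  + intros H. destruct (H 0 PI D3_0) as [H2 _]. rewrite dp0 in H2 by (auto; lra).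
    destruct H2 as [H2 H3]. simpl in H2. destruct (Req_dec (Qp q' e' + - q) 0) as [Z|Z].
    * exfalso; apply H3; f_equal; exact Z.
    * lra.
  + intros H w w' H3.
    destruct (gen_bounds q' e' q e w w') as [G1 [G2 [G3 G4]]]; auto; try lra.
    split; eapply elt_opp0; eauto.
- intros q e [Hq He] HB HQ. apply part2; auto; lra.
Qed.
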